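(* Let $\zeta\in(0,\infty)$ and let $d\in\mathbf{MT}([0,\zeta])$; let $(T,d,r,\mu)$ be the induced pointed measured compact real tree and $p:[0,\zeta]\to T$ the canonical projection. Let $$U=\{s\in(0,\zeta):\ \forall s'\in[0,\zeta]\setminus\{s\},\ d(0,s)+d(s,s')>d(0,s')\}.$$ If $[0,\zeta]\setminus U$ is Lebesgue-negligible, then $(T,d,r,\mu)$ is a continuum real tree.
   Context: $\mathbf{MT}([0,\zeta])$: continuous pseudo-metrics $d$ on $[0,\zeta]$ satisfying the four points inequality $d(s_1,s_2)+d(s_3,s_4)\le\max(d(s_1,s_3)+d(s_2,s_4),d(s_1,s_4)+d(s_2,s_3))$. The induced space: $T=[0,\zeta]/\{d=0\}$ with induced metric (a compact real tree), $r=p(0)$, $\mu$ the image of Lebesgue measure on $[0,\zeta]$ under $p$. A continuum real tree is a compact real tree $(T,d,r,\mu)$ with $\mu$ a finite diffuse Borel measure with topological support $T$ and $\mu(T\setminus\mathtt{Lf}(T))=0$, where $\mathtt{Lf}(T)$ is the set of points $\sigma\ne r$ such that $T\setminus\{\sigma\}$ is connected (degree $1$). *)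

(* Defs.v *)
From HB Require Import structures.
From mathcomp Require Import all_boot all_order all_algebra.
From mathcomp Require Import all_classical all_reals all_analysis.
Set Implicit Arguments. Unset Strict Implicit. Unset Printing Implicit Defensive.
Import Order.TTheory GRing.Theory Num.Theory.
Local Open Scope classical_set_scope.
Local Open Scope ring_scope.

Section MetricNotions.
Variables (R : realType) (X : Type) (dist : X -> X -> R).

Definition is_metric : Prop :=
  [/\ (forall x y, 0 <= dist x y),
      (forall x y, dist x y = 0 <-> x = y),
      (forall x y, dist x y = dist y x) &
      (forall x y z, dist x z <= dist x y + dist y z)].

Definition mball (x : X) (e : R) : set X := [set y | dist x y < e].

Definition mopen (A : set X) : Prop :=
  forall x, A x -> exists2 e : R, 0 < e & mball x e `<=` A.

Definition mcompact (A : set X) : Prop :=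
  forall (I : Type) (U : I -> set X), (forall i, mopen (U i)) ->
    A `<=` \bigcup_i U i ->
    exists (n : nat) (j : nat -> I),
      A `<=` [set x | exists2 k : nat, (k < n)%N & U (j k) x].

Definition mconnected (A : set X) : Prop :=
  forall U V : set X, mopen U -> mopen V -> A `<=` U `|` V ->
    A `&` U `&` V = set0 -> A `&` U !=set0 -> A `&` V !=set0 -> False.

Definition path_continuous (f : R -> X) (a b : R) : Prop :=
  forall t, a <= t <= b -> forall e : R, 0 < e -> exists2 del : R, 0 < del &
    forall t', a <= t' <= b -> `|t - t'| < del -> dist (f t) (f t') < e.

Definition geodesic (f : R -> X) (x y : X) : Prop :=
  [/\ f 0 = x, f (dist x y) = y &
      forall s t, 0 <= s <= dist x y -> 0 <= t <= dist x y ->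
        dist (f s) (f t) = `|s - t|].

(* Real tree (Evans' definition). *)
Definition is_real_tree : Prop :=
  [/\ is_metric,
      (forall x y, exists f, geodesic f x y),
      (forall x y f g, geodesic f x y -> geodesic g x y ->
         forall s, 0 <= s <= dist x y -> f s = g s) &
      (forall x y f q, geodesic f x y ->
         path_continuous q 0 1 ->
         {in [set t : R | 0 <= t <= 1] &, injective q} ->
         q 0 = x -> q 1 = y ->
         q @` [set t : R | 0 <= t <= 1] = f @` [set t : R | 0 <= t <= dist x y])].

Definition is_compact_real_tree : Prop := is_real_tree /\ mcompact setT.

Definition mborel : set (set X) := smallest (sigma_algebra setT) mopen.

Definition is_borel_measure (mu : set X -> \bar R) : Prop :=
  [/\ mu set0 = 0%E,
      (forall A, mborel A -> (0 <= mu A)%E) &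
      (forall F : nat -> set X, (forall n, mborel (F n)) -> trivIset setT F ->
         (fun n => \sum_(0 <= i < n) mu (F i))%E @ \oo --> mu (\bigcup_n F n))].

Definition msupport (mu : set X -> \bar R) : set X :=
  [set x | forall U, mopen U -> U x -> (0 < mu U)%E].

Definition leaves (r : X) : set X :=
  [set sigma | sigma <> r /\ mconnected (~` [set sigma])].

Definition continuum_real_tree (r : X) (mu : set X -> \bar R) : Prop :=
  [/\ is_compact_real_tree,
      is_borel_measure mu /\ (mu setT < +oo)%E,
      (forall x, mu [set x] = 0%E),
      msupport mu = setT &
      mu (~` leaves r) = 0%E].

End MetricNotions.

Section InducedTree.
Variables (R : realType) (zeta : R) (d : R -> R -> R).

Let I (s : R) := 0 <= s <= zeta.

Definition MT : Prop :=
  [/\ (forall s, I s -> d s s = 0),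
      (forall s t, I s -> I t -> d s t = d t s /\ 0 <= d s t),
      (forall s t u, I s -> I t -> I u -> d s u <= d s t + d t u),
      (forall s t, I s -> I t -> forall e : R, 0 < e -> exists2 del : R, 0 < del &
         forall s' t', I s' -> I t' -> `|s - s'| < del -> `|t - t'| < del ->
           `|d s t - d s' t'| < e) &
      (forall s1 s2 s3 s4, I s1 -> I s2 -> I s3 -> I s4 ->
         d s1 s2 + d s3 s4 <= Num.max (d s1 s3 + d s2 s4) (d s1 s4 + d s2 s3))].

Definition cls (s : R) : set R := [set t | 0 <= t <= zeta /\ d s t = 0].

(* the quotient T = [0,zeta] / {d = 0} *)
Definition Tpt : Type := {A : set R | exists2 s, 0 <= s <= zeta & A = cls s}.

Definition rep (A : Tpt) : R := s2val (cid2 (proj2_sig A)).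

Definition Tdist (A B : Tpt) : R := d (rep A) (rep B).

Definition Tproj (s : R) (h : 0 <= s <= zeta) : Tpt :=
  exist _ (cls s) (ex_intro2 _ _ s h erefl).

Lemma zero_in_interval (hz : 0 <= zeta) : (0 : R) <= 0 <= zeta.
Proof. by rewrite lexx hz. Qed.

Definition Troot (hz : 0 <= zeta) : Tpt := Tproj (zero_in_interval hz).

Definition Tmu (B : set Tpt) : \bar R :=
  lebesgue_measure [set s : R | exists h : 0 <= s <= zeta, B (Tproj h)].

End InducedTree.

(* Main.v *)
Require Import Defs.
From HB Require Import structures.
From mathcomp Require Import all_boot all_order all_algebra.
From mathcomp Require Import all_classical all_reals all_analysis.
From mathcomp Require Import measurable_realfun.
From mathcomp Require Import ring lra.
Import Order.TTheory GRing.Theory Num.Theory.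
Import numFieldNormedType.Exports.
Local Open Scope classical_set_scope.
Local Open Scope ring_scope.
Section RT.
Context {R : realType} {X : Type} {dist : X -> X -> R}.
Hypothesis hm : is_metric dist.
Hypothesis h4 : forall x y z w, dist x y + dist z w <= dist x z + dist y w \/
                                 dist x y + dist z w <= dist x w + dist y z.

Lemma rt_d0 x y : 0 <= dist x y. Proof. by case: hm. Qed.
Lemma rt_dxx x : dist x x = 0. Proof. by case: hm => _ /(_ x x) [_ ->]. Qed.
Lemma rt_deq x y : dist x y = 0 -> x = y. Proof. by case: hm => _ /(_ x y) [+ _]. Qed.
Lemma rt_dsym x y : dist x y = dist y x. Proof. by case: hm. Qed.
Lemma rt_dtri x y z : dist x z <= dist x y + dist y z. Proof. by case: hm. Qed.

Definition ropen (a b : R) (P : R -> Prop) := forall t, a <= t <= b -> P t ->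
  exists2 e : R, 0 < e & forall t', a <= t' <= b -> `|t - t'| < e -> P t'.

Lemma path_connect (P Q : R -> Prop) a b : a <= b -> P a -> Q b ->
  (forall t, a <= t <= b -> P t \/ Q t) -> ropen a b P -> ropen a b Q ->
  exists t, [/\ a <= t <= b, P t & Q t].
Proof.
move=> ab Pa Qb cov oP oQ.
apply: contrapT => nex.
have excl t : a <= t <= b -> P t -> Q t -> False.
  by move=> ? ? ?; apply: nex; exists t.
pose S := [set t | a <= t <= b /\ forall u, a <= u <= t -> P u].
have Sa : S a.
  split; first by rewrite lexx ab.
  move=> u /andP[h1 h2]; have -> : u = a by apply/eqP; rewrite eq_le h1 h2.
  done.
have ubS : ubound S b by move=> t [/andP[_ ->]].
have hS : has_sup S by split; [exists a | exists b].
have as_ : a <= sup S := sup_upper_bound hS Sa.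
have sb : sup S <= b := ge_sup (ex_intro _ a Sa) ubS.
have Is : a <= sup S <= b by rewrite as_ sb.
have PS u : a <= u -> u < sup S -> P u.
  move=> au us.
  have [t [_ Pt] ut] := @sup_adherent _ S (sup S - u) ltac:(by rewrite subr_gt0) hS.
  apply: Pt; rewrite au /=; lra.
case: (cov _ Is) => [Ps|Qs].
- have [e e0 He] := oP _ Is Ps.
  have Pall u : a <= u -> u <= sup S + e / 2 -> u <= b -> P u.
    move=> au ue ub; case: (ltP u (sup S)) => us; first exact: PS.
    apply: He; first by rewrite au ub.
    rewrite ler0_norm ?subr_le0 //; lra.
  case: (leP (sup S + e / 2) b) => seb.
    have : S (sup S + e / 2).
      split; first by apply/andP; split; lra.
      by move=> u /andP[au ue]; apply: Pall => //; lra.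
    move=> /(sup_upper_bound hS); lra.
  have Sb : S b.
    split; first by rewrite ab lexx.
    by move=> u /andP[au ub]; apply: Pall => //; lra.
  have bs := sup_upper_bound hS Sb.
  apply: (excl b); first by rewrite ab lexx.
    by apply: Pall => //; lra.
  done.
- have [e e0 He] := oQ _ Is Qs.
  have [t [It Pt] st] := sup_adherent e0 hS.
  have ts := sup_upper_bound hS (conj It Pt).
  apply: (excl t It); first by apply: Pt; rewrite lexx; case/andP: It => ->.
  apply: He => //; rewrite ger0_norm ?subr_ge0 //; lra.
Qed.

Lemma hit (q : R -> X) a b x y : a <= b -> path_continuous dist q a b ->
  q a = x -> q b = y ->
  forall h, 0 <= h <= dist x y ->
  exists t, [/\ a <= t <= b, dist x (q t) = h & dist (q t) y = dist x y - h].
Proof.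
move=> ab qc qa qb h /andP[h0 hD].
have [->|hne] := eqVneq h 0.
  exists a; split; first by rewrite lexx ab.
    by rewrite qa rt_dxx.
  by rewrite qa subr0.
have hpos : 0 < h by rewrite lt_neqAle eq_sym hne h0.
apply: contrapT => nex.
pose g t := dist x (q t) + dist x y - dist (q t) y.
have [t [_ Pt Qt]] : exists t, [/\ a <= t <= b, g t < 2 * h & 2 * h <= g t].
  apply: path_connect => //.
  - by rewrite /g qa rt_dxx; lra.
  - by rewrite /g qb rt_dxx; lra.
  - by move=> t _; case: (ltP (g t) (2 * h)); [left|right].
  - move=> t It Pt.
    have [del del0 Hd] := qc t It ((2 * h - g t) / 2) ltac:(rewrite /g in Pt *; lra).
    exists del => // t' It' tt'.
    have := Hd t' It' tt'.
    have := rt_dtri x (q t) (q t'). have := rt_dtri (q t) (q t') y.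
    rewrite /g in Pt *; lra.
  - move=> t It Qt.
    have dgt : h < dist x (q t).
      have := rt_dtri x (q t) y.
      case: (ltP h (dist x (q t))) => // le Ht.
      exfalso; apply: nex; exists t; split => //; rewrite /g in Qt; lra.
    have [del del0 Hd] := qc t It (dist x (q t) - h) ltac:(lra).
    exists del => // t' It' tt'.
    have := Hd t' It' tt'.
    have := rt_dtri x (q t') (q t).
    case: (h4 (q t') y x (q t)) => H;
    move: H; rewrite ?(rt_dsym (q t') x) ?(rt_dsym y (q t)) ?(rt_dsym (q t') (q t)) ?(rt_dsym y x);
    rewrite /g in Qt *; lra.
lra.
Qed.
Arguments hit [q a b x y] _ _ _ _ [h].

Lemma seg_unique x y w w' : dist x w + dist w y = dist x y ->
  dist x w' = dist x w -> dist w' y = dist w y -> w = w'.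
Proof.
move=> hw h1 h2; apply: rt_deq.
have := rt_d0 w w'.
case: (h4 w w' x y); rewrite ?(rt_dsym w x) ?(rt_dsym w' x) ?h1 ?h2 => H; lra.
Qed.

Lemma seg_dist x y w1 w2 : dist x w1 + dist w1 y = dist x y ->
  dist x w2 + dist w2 y = dist x y ->
  dist x w1 <= dist x w2 -> dist w1 w2 = dist x w2 - dist x w1.
Proof.
move=> e1 e2 le.
have := rt_dtri x w1 w2.
case: (h4 w1 w2 x y); rewrite ?(rt_dsym w1 x) ?(rt_dsym w2 x) => H; lra.
Qed.

Definition connecting x y := exists q a b,
  [/\ a <= b, path_continuous dist q a b, q a = x & q b = y].

Lemma geo_exists x y : connecting x y -> exists f, geodesic dist f x y.
Proof.
move=> [q [a [b [ab qc qa qb]]]].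
have : forall s, exists w, 0 <= s <= dist x y ->
    dist x w = s /\ dist w y = dist x y - s.
  move=> s; case: (pselect (0 <= s <= dist x y)) => hs; last by exists x.
  have [t [_ h1 h2]] := hit ab qc qa qb hs.
  by exists (q t).
move=> /choice [f Hf]; exists f; split.
- have [h1 _] := Hf 0 ltac:(by rewrite lexx rt_d0).
  by apply/esym/rt_deq.
- have [_ h2] := Hf (dist x y) ltac:(by rewrite lexx rt_d0).
  by apply: rt_deq; rewrite h2 subrr.
- move=> s t hs ht.
  have [a1 a2] := Hf s hs; have [b1 b2] := Hf t ht.
  case: (leP s t) => st.
    rewrite (@seg_dist x y (f s) (f t)); [|lra|lra|lra].
    by rewrite a1 b1 distrC ger0_norm ?subr_ge0.
  rewrite rt_dsym (@seg_dist x y (f t) (f s)); [|lra|lra|lra].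
  by rewrite a1 b1 ger0_norm ?subr_ge0 // ltW.
Qed.

Lemma geo_props f x y : geodesic dist f x y -> forall s, 0 <= s <= dist x y ->
  dist x (f s) = s /\ dist (f s) y = dist x y - s.
Proof.
case=> f0 fD fd s hs.
have I0 : (0:R) <= 0 <= dist x y by rewrite lexx rt_d0.
have ID : 0 <= dist x y <= dist x y by rewrite lexx rt_d0.
case/andP: (hs) => s0 sD.
split.
  by rewrite -{1}f0 fd // sub0r normrN ger0_norm.
by rewrite -{1}fD fd // ler0_norm ?opprB // subr_le0.
Qed.
Arguments geo_props [f x y].

Lemma path_sub q a b a' b' : a <= a' -> b' <= b ->
  path_continuous dist q a b -> path_continuous dist q a' b'.
Proof.
move=> aa bb qc t /andP[h1 h2] e e0.
have [del d0' H] := qc t ltac:(apply/andP; split; lra) e e0.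
exists del => // t' /andP[h3 h4'] tt'.
by apply: H => //; apply/andP; split; lra.
Qed.
Arguments path_sub [q a b a' b'].

Lemma inj_path x y f q : geodesic dist f x y -> path_continuous dist q 0 1 ->
  {in [set t : R | 0 <= t <= 1] &, injective q} -> q 0 = x -> q 1 = y ->
  q @` [set t : R | 0 <= t <= 1] = f @` [set t : R | 0 <= t <= dist x y].
Proof.
move=> gf qc qinj q0 q1; have fp := geo_props gf.
apply/seteqP; split => z [t /= It <-].
- case/andP: (It) => t0 t1.
  have onseg : dist x (q t) + dist (q t) y = dist x y.
    apply: contrapT => ne.
    have gt : dist x y < dist x (q t) + dist (q t) y.
      have := rt_dtri x (q t) y; rewrite le_eqVlt => /orP[/eqP E|//].
      by exfalso; apply: ne; rewrite E.
    pose h := (dist x (q t) + dist x y - dist (q t) y) / 2.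
    have := rt_dtri (q t) x y; have := rt_dtri x y (q t).
    rewrite (rt_dsym (q t) x) (rt_dsym y (q t)) => T1 T2.
    have hI : 0 <= h <= dist x y by apply/andP; split; rewrite /h; lra.
    have [c1 c2] := fp h hI.
    have cz : dist (f h) (q t) = dist x (q t) - h.
      have := rt_dtri x (f h) (q t).
      case: (h4 (f h) (q t) x y); rewrite ?(rt_dsym (f h) x) ?(rt_dsym (q t) x) => H;
        rewrite /h in c1 c2 H *; lra.
    have hI1 : 0 <= h <= dist x (q t) by apply/andP; split; rewrite /h; lra.
    have [t1' [It1 e1 e2]] := hit t0 (path_sub (lexx 0) t1 qc) q0 erefl hI1.
    have E1 : f h = q t1'.
      apply: (@seg_unique x (q t)); first by lra.
        by rewrite e1 c1.
      by rewrite e2 cz.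
    have kI : 0 <= dist x (q t) - h <= dist (q t) y by apply/andP; split; rewrite /h; lra.
    have [t2' [It2 e3 e4]] := hit t1 (path_sub t0 (lexx 1) qc) erefl q1 kI.
    have E2 : f h = q t2'.
      apply: (@seg_unique (q t) y); first by rewrite (rt_dsym (q t) (f h)) cz c2; rewrite /h; lra.
        by rewrite e3 (rt_dsym (q t) (f h)) cz.
      by rewrite e4 c2 /h; lra.
    have t12 : t1' = t2'.
      have m1 : t1' \in [set t : R | 0 <= t <= 1].
        by apply: mem_set; apply/andP; case/andP: It1 => ? ?; split; lra.
      have m2 : t2' \in [set t : R | 0 <= t <= 1].
        by apply: mem_set; apply/andP; case/andP: It2 => ? ?; split; lra.
      by apply: qinj m1 m2 _; rewrite -E1 -E2.
    case/andP: It1 => _ u1; case/andP: It2 => u2 _.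
    have tt : t1' = t by lra.
    move: cz; rewrite E1 tt rt_dxx; rewrite /h; lra.
  exists (dist x (q t)).
    by rewrite /= rt_d0 /=; have := rt_d0 (q t) y; lra.
  apply/esym; apply: (@seg_unique x y) => //.
    by have [-> _] := fp (dist x (q t)) ltac:(rewrite rt_d0 /=; have := rt_d0 (q t) y; lra).
  by have [_ ->] := fp (dist x (q t)) ltac:(rewrite rt_d0 /=; have := rt_d0 (q t) y; lra); lra.
- have [t' [It' e1 e2]] := hit ler01 qc q0 q1 It.
  exists t' => //.
  have [c1 c2] := fp t It.
  apply: (@seg_unique x y); first by lra.
    by rewrite c1.
  by rewrite c2.
Qed.

Lemma real_tree_of : (forall x y, connecting x y) -> is_real_tree dist.
Proof.
move=> con; split => //.
- by move=> x y; exact: geo_exists.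
- move=> x y f g gf gg s hs.
  have [a1 a2] := geo_props gf s hs; have [b1 b2] := geo_props gg s hs.
  apply: (@seg_unique x y); first by lra.
    by rewrite a1 b1.
  by rewrite a2 b2.
- move=> x y f q gf qc qinj q0 q1; exact: inj_path.
Qed.

Lemma leaf_conn r sg : r <> sg ->
  (forall z, z <> sg -> dist r z < dist r sg + dist sg z) ->
  (forall x y, exists f, geodesic dist f x y) -> mconnected dist (~` [set sg]).
Proof.
move=> rs hs geo.
have key : forall U V, mopen dist U -> mopen dist V -> ~` [set sg] `<=` U `|` V ->
    (forall w, w <> sg -> U w -> V w -> False) -> U r ->
    forall z, z <> sg -> V z -> False.
  move=> U V oU oV cov disj Ur z zs Vz.
  have [f gf] := geo r z; have fp := geo_props gf.
  have fns : forall t, 0 <= t <= dist r z -> f t <> sg.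
    move=> t ht E; have [e1 e2] := fp t ht; rewrite E in e1 e2.
    have := hs z zs; lra.
  case: gf => f0 fD fd.
  have [t [It Ut Vt]] : exists t, [/\ 0 <= t <= dist r z, U (f t) & V (f t)].
    apply: (@path_connect (fun t => U (f t)) (fun t => V (f t)) 0 (dist r z) (rt_d0 r z)).
  - by rewrite f0.
  - by rewrite fD.
  - by move=> t It; exact: (cov (f t) (fns t It)).
  - move=> t It Ut; have [e e0 He] := oU _ Ut.
    exists e => // t' It' tt'; apply: He; rewrite /mball /= fd //.
  - move=> t It Vt; have [e e0 He] := oV _ Vt.
    exists e => // t' It' tt'; apply: He; rewrite /mball /= fd //.
  exact: (disj (f t) (fns t It) Ut Vt).
move=> U V oU oV cov I0 [w1 [w1s Uw1]] [w2 [w2s Vw2]].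
have disj : forall w, w <> sg -> U w -> V w -> False.
  move=> w ws Uw Vw.
  have : (~` [set sg] `&` U `&` V) w by [].
  by rewrite I0.
have rs' : (~` [set sg]) r by move=> /= E; apply: rs.
case: (cov r rs') => Hr.
  exact: (key U V oU oV cov disj Hr w2 w2s Vw2).
apply: (key V U oV oU _ _ Hr w1 w1s Uw1).
  by move=> w /cov; rewrite setUC.
by move=> w ws Vw Uw; exact: (disj w ws Uw Vw).
Qed.

End RT.

Lemma leb_mono (R : realType) (A B : set R) : A `<=` B ->
  (lebesgue_measure A <= lebesgue_measure B)%E.
Proof. move=> AB; exact: le_mu_ext. Qed.

Section TreeT.
Variables (R : realType) (zeta : R) (d : R -> R -> R).
Hypothesis hz : 0 < zeta.
Hypothesis hd : MT zeta d.

Local Notation I s := (0 <= s <= zeta).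

Lemma mt_dss s : I s -> d s s = 0.
Proof. by case: hd => h _ _ _ _; apply: h. Qed.
Lemma mt_sym s t : I s -> I t -> d s t = d t s.
Proof. by case: hd => _ h _ _ _ hs ht; case: (h s t hs ht). Qed.
Lemma mt_ge0 s t : I s -> I t -> 0 <= d s t.
Proof. by case: hd => _ h _ _ _ hs ht; case: (h s t hs ht). Qed.
Lemma mt_tri s t u : I s -> I t -> I u -> d s u <= d s t + d t u.
Proof. by case: hd => _ _ h _ _; apply: h. Qed.
Arguments mt_dss [s]. Arguments mt_sym [s t]. Arguments mt_ge0 [s t].
Arguments mt_tri [s t u].

Definition tp (s : R) : Tpt zeta d :=
  match pselect (0 <= s <= zeta) with
  | left h => Tproj d h
  | right _ => Tproj d (zero_in_interval (ltW hz))
  end.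

Lemma tpE s (h : I s) : tp s = Tproj d h.
Proof.
rewrite /tp; case: pselect => [h'|]; last by move=> /(_ h).
by rewrite (Prop_irrelevance h h').
Qed.
Arguments tpE [s].

Lemma repP (A : Tpt zeta d) : I (rep A) /\ proj1_sig A = cls zeta d (rep A).
Proof.
split; [exact: (s2valP (cid2 (proj2_sig A))) | exact: (s2valP' (cid2 (proj2_sig A)))].
Qed.

Lemma tp_rep A : tp (rep A) = A.
Proof.
have [hI hE] := repP A; rewrite (tpE hI).
case: A hI hE => S pS hI /= hE.
by apply: eq_exist; apply: esym.
Qed.

Lemma cls_eq s t : I s -> I t -> d s t = 0 -> cls zeta d s = cls zeta d t.
Proof.
move=> Is It st; apply/seteqP; split => u [Iu E]; split => //.
- have := mt_tri It Is Iu; have := mt_ge0 It Iu; rewrite (mt_sym It Is); lra.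
- have := mt_tri Is It Iu; have := mt_ge0 Is Iu; lra.
Qed.

Lemma tp_eq s t : I s -> I t -> d s t = 0 -> tp s = tp t.
Proof. by move=> Is It st; rewrite (tpE Is) (tpE It); apply: eq_exist; exact: cls_eq. Qed.

Lemma rep_tp s : I s -> I (rep (tp s)) /\ d s (rep (tp s)) = 0.
Proof.
move=> Is; have [I1 E1] := repP (tp s); split => //.
move: E1; rewrite {1}(tpE Is) /= => E1.
have : cls zeta d (rep (tp s)) (rep (tp s)) by split => //; exact: mt_dss.
by rewrite -E1 => -[].
Qed.
Arguments rep_tp [s].

Lemma Tdist_tp s t : I s -> I t -> Tdist (tp s) (tp t) = d s t.
Proof.
move=> Is It; have [I1 e1] := rep_tp Is; have [I2 e2] := rep_tp It.
rewrite /Tdist.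
have := mt_tri I1 Is I2; have := mt_tri Is It I2; have := mt_tri Is I1 It;
have := mt_tri I1 I2 It; have := mt_sym I1 Is; have := mt_sym I2 It; lra.
Qed.

Lemma T_metric : is_metric (@Tdist R zeta d).
Proof.
split.
- by move=> A B; rewrite /Tdist; apply: mt_ge0; [exact: (repP A).1 | exact: (repP B).1].
- move=> A B; split.
  + move=> h; rewrite -(tp_rep A) -(tp_rep B).
    by apply: tp_eq; [exact: (repP A).1|exact: (repP B).1|exact: h].
  + by move=> ->; rewrite /Tdist; apply: mt_dss; exact: (repP B).1.
- by move=> A B; rewrite /Tdist; apply: mt_sym; [exact: (repP A).1 | exact: (repP B).1].
- move=> A B C; rewrite /Tdist; apply: mt_tri;
    [exact: (repP A).1 | exact: (repP B).1 | exact: (repP C).1].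
Qed.

Lemma T_4 (x y z w : Tpt zeta d) :
  Tdist x y + Tdist z w <= Tdist x z + Tdist y w \/
  Tdist x y + Tdist z w <= Tdist x w + Tdist y z.
Proof.
rewrite /Tdist.
case: hd => _ _ _ _ /(_ _ _ _ _ (repP x).1 (repP y).1 (repP z).1 (repP w).1).
by rewrite le_max => /orP[]; [left|right].
Qed.

Lemma tp_cont s : I s -> forall e, 0 < e -> exists2 del : R, 0 < del &
  forall t, I t -> `|s - t| < del -> Tdist (tp s) (tp t) < e.
Proof.
move=> Is e e0; case: hd => _ _ _ hc _.
have [del del0 H] := hc s s Is Is e e0.
exists del => // t It st.
rewrite Tdist_tp //.
have := H s t Is It; rewrite subrr normr0 => /(_ del0 st).
rewrite mt_dss // sub0r normrN => H'.
exact: le_lt_trans (ler_norm _) H'.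
Qed.
Arguments tp_cont [s].

Lemma tp_path a b : 0 <= a -> b <= zeta -> path_continuous (@Tdist R zeta d) tp a b.
Proof.
move=> a0 bz t /andP[ta tb] e e0.
have It : I t by apply/andP; split; lra.
have [del del0 H] := tp_cont It _ e0.
exists del => // t' /andP[t'a t'b] tt'.
by apply: H => //; apply/andP; split; lra.
Qed.

Lemma tp_path_rev a b : 0 <= a -> b <= zeta ->
  path_continuous (@Tdist R zeta d) (fun s => tp (a + b - s)) a b.
Proof.
move=> a0 bz t /andP[ta tb] e e0.
have It : I (a + b - t) by apply/andP; split; lra.
have [del del0 H] := tp_cont It _ e0.
exists del => // t' /andP[t'a t'b] tt'.
apply: H; first by apply/andP; split; lra.
have -> : a + b - t - (a + b - t') = - (t - t') by ring.
by rewrite normrN.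
Qed.

Lemma T_connecting (A B : Tpt zeta d) : @connecting R _ (@Tdist R zeta d) A B.
Proof.
have [IA _] := repP A; have [IB _] := repP B.
case/andP: IA => a0 az; case/andP: IB => b0 bz.
case: (leP (rep A) (rep B)) => ab.
  by exists tp, (rep A), (rep B); split => //; [exact: tp_path | exact: tp_rep | exact: tp_rep].
exists (fun s => tp (rep B + rep A - s)), (rep B), (rep A); split.
- exact: ltW.
- exact: tp_path_rev.
- by rewrite /= addrAC subrr add0r tp_rep.
- by rewrite /= addrK tp_rep.
Qed.


Definition Wset (P : Tpt zeta d -> Prop) : set R :=
  [set t | exists2 del : R, 0 < del &
     forall t', I t' -> `|t - t'| < del -> P (tp t')].

Lemma Wset_open P : open (Wset P).
Proof.
rewrite (@openE R) => t [del del0 H].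
apply/nbhs_ballP; exists (del / 2); first by rewrite /= divr_gt0.
move=> u; rewrite /ball /= => tu.
exists (del / 2); first lra.
move=> t' It' ut'; apply: H => //.
have := ler_distD u t t'; lra.
Qed.

Lemma Wset_cover P t : mopen (@Tdist R zeta d) P -> I t -> P (tp t) -> Wset P t.
Proof.
move=> oP It Pt; have [e e0 He] := oP _ Pt.
have [del del0 H] := tp_cont It _ e0.
by exists del => // t' It' tt'; apply: He; exact: H.
Qed.

Lemma T_compact : mcompact (@Tdist R zeta d) setT.
Proof.
move=> J U oU cov.
have hx : forall s : R, exists i, U i (tp s).
  by move=> s; have [i _ Ui] := cov (tp s) Logic.I; exists i.
have [ix Hix] := choice hx.
have K := @segment_compact R 0 zeta; rewrite compact_cover in K.
have cv : [set` `[0, zeta]%R] `<=` cover setT (fun s => Wset (U (ix s))).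
  move=> t; rewrite /= in_itv /= => It; exists t => //.
  exact: Wset_cover.
have [D' _ sub] := K R setT (fun s => Wset (U (ix s))) (fun s _ => Wset_open _) cv.
exists (size (finmap.enum_fset D')), (fun k => ix (nth 0 (finmap.enum_fset D') k)).
move=> x _.
have [Ix _] := repP x.
have := sub (rep x) ltac:(by rewrite /= in_itv /=).
case=> s Ds [del del0 H].
have Ux := H (rep x) Ix ltac:(by rewrite subrr normr0).
rewrite tp_rep in Ux.
exists (index s (finmap.enum_fset D')); first by rewrite index_mem.
by rewrite nth_index.
Qed.

Definition Qs (B : set (Tpt zeta d)) : set R := [set s | I s /\ B (tp s)].

Lemma TmuE B : Tmu B = lebesgue_measure (Qs B).
Proof.
rewrite /Tmu; congr (lebesgue_measure _); apply/seteqP; split => s /=.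
- by case=> h Bh; split => //; rewrite (tpE h).
- by case=> h Bh; exists h; rewrite -(tpE h).
Qed.

Lemma Qs_open B : mopen (@Tdist R zeta d) B -> measurable (Qs B).
Proof.
move=> oB.
have -> : Qs B = [set` `[0, zeta]%R] `&` Wset B.
  apply/seteqP; split => s.
  - case=> Is Bs; split; first by rewrite /= in_itv.
    exact: Wset_cover.
  - rewrite /= in_itv /= => -[Is [del del0 H]]; split => //.
    by apply: H => //; rewrite subrr normr0.
apply: measurableI; first exact: measurable_itv.
apply: open_measurable; exact: Wset_open.
Qed.

Lemma Qs_borel B : mborel (@Tdist R zeta d) B -> measurable (Qs B).
Proof.
move=> hB; apply: (hB [set B | measurable (Qs B)]); split; last first.
  by move=> A oA; exact: Qs_open.
split.
- by rewrite /=; have -> : Qs set0 = set0 by apply/seteqP; split => s // [].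
- move=> A /= mA; rewrite /=.
  have -> : Qs (setT `\` A) = [set` `[0, zeta]%R] `\` Qs A.
    apply/seteqP; split => s /=.
    - by case=> Is [_ nA]; split; [rewrite in_itv | case].
    - by rewrite in_itv /= => -[Is nQ]; split => //; split => // As; apply: nQ.
  by apply: measurableD => //; exact: measurable_itv.
- move=> A /= mA; rewrite /=.
  have -> : Qs (\bigcup_k A k) = \bigcup_k Qs (A k).
    apply/seteqP; split => s /=.
    - by case=> Is [k _ Ak]; exists k.
    - by case=> k _ [Is Ak]; split => //; exists k.
  exact: bigcupT_measurable.
Qed.

Lemma T_borel : is_borel_measure (@Tdist R zeta d) (@Tmu R zeta d).
Proof.
split.
- by rewrite TmuE; have -> : Qs set0 = set0 by apply/seteqP; split => s // [].
- by move=> A _; rewrite TmuE; exact: measure_ge0.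
- move=> F mF tF.
  have -> : Tmu (\bigcup_n F n) = lebesgue_measure (\bigcup_n Qs (F n)).
    rewrite TmuE; congr (lebesgue_measure _); apply/seteqP; split => s /=.
    - by case=> Is [k _ Ak]; exists k.
    - by case=> k _ [Is Ak]; split => //; exists k.
  have -> : (fun n => \sum_(0 <= i < n) Tmu (F i))%E =
            (fun n => \sum_(0 <= i < n) lebesgue_measure (Qs (F i)))%E.
    by apply: funext => n; apply: eq_bigr => i _; rewrite TmuE.
  apply: measure_sigma_additive.
  + by move=> i; apply: Qs_borel.
  + move=> i j _ _ [s [[_ Fi] [_ Fj]]]; apply: (tF i j) => //.
    by exists (tp s).
Qed.

Lemma T_real_tree : is_real_tree (@Tdist R zeta d).
Proof. apply: real_tree_of; [exact: T_metric | exact: T_4 | exact: T_connecting]. Qed.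

Lemma I0 : (0:R) <= 0 <= zeta.
Proof. exact: zero_in_interval (ltW hz). Qed.

Lemma main_T :
  let U := [set s : R | 0 < s < zeta /\
              forall s', 0 <= s' <= zeta -> s' <> s -> d 0 s + d s s' > d 0 s'] in
  (@lebesgue_measure R).-negligible ([set s : R | 0 <= s <= zeta] `\` U) ->
  continuum_real_tree (@Tdist R zeta d) (Troot d (ltW hz)) (@Tmu R zeta d).
Proof.
move=> U [N [mN N0 subN]].
have notU_N s : I s -> ~ U s -> N s by move=> Is nU; apply: subN; split.
have Ueq s t : U s -> U t -> I s -> I t -> d s t = 0 -> s = t.
  move=> [_ Hs] [_ Ht] Is It st; apply: contrapT => ne.
  have := Hs t It (fun e => ne (esym e)); have := Ht s Is ne.
  rewrite (mt_sym It Is) st; lra.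
have dtp s t : I s -> I t -> tp s = tp t -> d s t = 0.
  move=> Is It E; rewrite -Tdist_tp // E.
  by case: T_metric => _ /(_ (tp t) (tp t)) [_ ->].
split.
- split; first exact: T_real_tree.
  exact: T_compact.
- split; first exact: T_borel.
  rewrite TmuE.
  have -> : Qs setT = [set` `[0, zeta]%R].
    by apply/seteqP; split => s /=; rewrite in_itv /=; [case | split].
  by rewrite lebesgue_measure_itv /= lte_fin hz -EFinD ltry.
- move=> x; rewrite TmuE; apply/eqP; rewrite eq_le measure_ge0 andbT.
  case: (pselect (exists u, Qs [set x] u /\ U u)) => [[u [[Iu xu] Uu]]|nex].
  + have sub : Qs [set x] `<=` N `|` [set u].
      move=> s [Is xs]; case: (pselect (U s)) => Us.
        right; apply: (Ueq s u Us Uu Is Iu).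
        exact: (dtp s u Is Iu (etrans xs (esym xu))).
      by left; exact: notU_N.
    apply: (le_trans (@leb_mono R (Qs [set x]) (N `|` [set u]) sub)).
    have hU : (lebesgue_measure (N `|` [set u]) <=
               lebesgue_measure N + lebesgue_measure [set u])%E.
      exact: (measureU2 (@lebesgue_measure R) mN (measurable_set1 u)).
    by rewrite N0 lebesgue_measure_set1 adde0 in hU.
  + have sub : Qs [set x] `<=` N.
      move=> s [Is xs]; apply: notU_N => // Us; apply: nex; exists s; split => //.
    by have := @leb_mono R (Qs [set x]) N sub; rewrite N0.
- apply/seteqP; split => // x _ V oV Vx.
  rewrite TmuE.
  have [Ia _] := repP x.
  have := @Wset_cover V (rep x) oV Ia; rewrite tp_rep => /(_ Vx) [del del0 H].
  case/andP: (Ia) => a0 az.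
  pose lo := Num.max 0 (rep x - del); pose hi := Num.min zeta (rep x + del).
  have lohi : lo < hi.
    rewrite /lo /hi gt_max !lt_min; apply/andP; split; apply/andP; split;
    [exact: hz | have h : 0 < rep x + del by lra | have h : rep x - del < zeta by lra
    | have h : rep x - del < rep x + del by lra]; exact: h.
  have sub : [set` `]lo, hi[%R] `<=` Qs V.
    move=> t; rewrite /= in_itv /= /lo /hi gt_max lt_min => /andP[/andP[t0 t1] /andP[t2 t3]].
    have It : I t by apply/andP; split; lra.
    split => //; apply: H => //.
    by rewrite ltr_norml; apply/andP; split; lra.
  have hm := @leb_mono R _ _ sub.
  apply: (lt_le_trans _ hm).
  rewrite lebesgue_measure_itv /= lte_fin lohi -EFinD lte_fin subr_gt0.
  exact: lohi.
- have r0 : Troot d (ltW hz) = tp 0 by rewrite (tpE (zero_in_interval (ltW hz))).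
  rewrite r0 TmuE; apply/eqP; rewrite eq_le measure_ge0 andbT.
  have sub : Qs (~` leaves (@Tdist R zeta d) (tp 0)) `<=` N.
    move=> s [Is nl]; apply: notU_N => // Us; apply: nl.
    have Us' := Us; case: Us' => /andP[s0 sz] Hs.
    have s0' : 0 <> s by move=> E; rewrite E ltxx in s0.
    have d0s : 0 < d 0 s.
      have := Hs 0 I0 s0'; rewrite mt_dss ?I0 // (mt_sym Is I0); have := mt_ge0 I0 Is; lra.
    have ne : tp s <> tp 0.
      move=> E; have := dtp _ _ Is I0 E; rewrite (mt_sym Is I0); lra.
    split => //.
    apply: (@leaf_conn R _ _ T_metric (tp 0) (tp s)).
    + by move=> E; apply: ne.
    + move=> z zs; rewrite -(tp_rep z) in zs *.
      have [Iz _] := repP z.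
      rewrite (Tdist_tp _ _ I0 Iz) (Tdist_tp _ _ I0 Is) (Tdist_tp _ _ Is Iz).
      by apply: Hs => // E; apply: zs; rewrite E.
    + by case: T_real_tree.
  by have := @leb_mono R _ N sub; rewrite N0.
Qed.

End TreeT.

Theorem lemma4p8 (R : realType) (zeta : R) (hz : 0 < zeta) (d : R -> R -> R)
  (hd : MT zeta d) :
  let U := [set s : R | 0 < s < zeta /\
              forall s', 0 <= s' <= zeta -> s' <> s -> d 0 s + d s s' > d 0 s'] in
  (@lebesgue_measure R).-negligible ([set s : R | 0 <= s <= zeta] `\` U) ->
  continuum_real_tree (@Tdist R zeta d) (Troot d (ltW hz)) (@Tmu R zeta d).
Proof. exact: main_T. Qed.
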